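(* Let $\sigma$ be a signature and $\mathcal F\in\mathbb F_\sigma$. (i) If $S,T$ are generalized causal teams over $\sigma$ with $T$ uniform and $T=T^{\mathcal F}$, then $S\models^g\Theta^{T^-}\wedge\Phi^{\mathcal F}$ iff $S\preccurlyeq T$. (ii) For any causal teams $S=(S^-,\mathcal G)$ and $T=(T^-,\mathcal F)$ over $\sigma$: $S\models^c\Theta^{T^-}\wedge\Phi^{\mathcal F}$ iff $S\preccurlyeq T$.
   Context: A signature $\sigma=(\mathrm{Dom},\mathrm{Ran})$: $\mathrm{Dom}$ nonempty finite set of variables, each with nonempty finite range $\mathrm{Ran}(X)$; $\mathbf X=\mathbf x$ abbreviates $X_1=x_1\wedge\dots\wedge X_n=x_n$ ($\mathbf x\in\prod\mathrm{Ran}(X_i)$), inconsistent if it contains $X=x,X=x'$ with $x\ne x'$. $\mathcal{CO}[\sigma]$: $\alpha::=X=x\mid\neg\alpha\mid\alpha\wedge\alpha\mid\alpha\vee\alpha\mid\mathbf X=\mathbf x\;\Box\!\!\rightarrow\alpha$; $\alpha\supset\beta$ abbreviates $\neg\alpha\vee\beta$; $\bot$ abbreviates $X=x\wedge\neg(X=x)$. Systems of functions $\mathcal F$: for each $V\in\mathrm{En}(\mathcal F)\subseteq\mathrm{Dom}$ parents $PA^{\mathcal F}_V\subseteq\mathrm{Dom}\setminus\{V\}$ and $\mathcal F_V:\mathrm{Ran}(PA^{\mathcal F}_V)\to\mathrm{Ran}(V)$; $\mathrm{Ex}(\mathcal F)=\mathrm{Dom}\setminus\mathrm{En}(\mathcal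 F)$; only recursive (acyclic parent graph), forming $\mathbb F_\sigma$. Assignments $s$ ($s(X)\in\mathrm{Ran}(X)$) form $\mathbb A_\sigma$; $s$ is compatible with $\mathcal F$ if $s(V)=\mathcal F_V(s(PA^{\mathcal F}_V))$ for $V\in\mathrm{En}(\mathcal F)$. For consistent $\mathbf X=\mathbf x$: $\mathcal F_{\mathbf X=\mathbf x}$ restricts $\mathcal F$ to $\mathrm{En}(\mathcal F)\setminus\mathbf X$; $s^{\mathcal F}_{\mathbf X=\mathbf x}$: $X_i\mapsto x_i$, $V\mapsto s(V)$ on $\mathrm{Ex}(\mathcal F)\setminus\mathbf X$, $V\mapsto\mathcal F_V(s^{\mathcal F}_{\mathbf X=\mathbf x}(PA^{\mathcal F}_V))$ on $\mathrm{En}(\mathcal F)\setminus\mathbf X$. Causal team $T=(T^-,\mathcal F)$ ($T^-$ a set of compatible assignments; all teams with empty team component identified as $\emptyset$); causal subteams $(S^-,\mathcal F)$, $S^-\subseteq T^-$ (and $\emptyset$); $T_{\mathbf X=\mathbf x}=(\{s^{\mathcal F}_{\mathbf X=\mathbf x}:s\in T^-\},\mathcal F_{\mathbf X=\mathbf x})$. $\models^c$: $T\models X=x$ iff $s(X)=x$ for all $s\in T^-$; $T\models\neg\alpha$ iff $(\{s\},\mathcal F)\not\models\alpha$ for all $s\in T^-$; $\wedge$ classical; $T\models\alpha\vee\beta$ iff causal subteams $T_1,T_2$ exist with $T_1^-\cup T_2^-=T^-$, $T_1\models\alpha$, $T_2\models\beta$; $T\models\mathbf X=\mathbf x\;\Box\!\!\rightarrow\alpha$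 iff $\mathbf X=\mathbf x$ inconsistent or $T_{\mathbf X=\mathbf x}\models\alpha$. Generalized causal team: a set $T$ of compatible pairs $(s,\mathcal F)$, $\mathcal F\in\mathbb F_\sigma$; subteams are subsets; $T^-=\{s:(s,\mathcal F)\in T\}$; $T_{\mathbf X=\mathbf x}=\{(s^{\mathcal F}_{\mathbf X=\mathbf x},\mathcal F_{\mathbf X=\mathbf x}):(s,\mathcal F)\in T\}$; $\models^g$: same clauses except $T\models\neg\alpha$ iff $\{(s,\mathcal F)\}\not\models\alpha$ for all $(s,\mathcal F)\in T$, and $T\models\alpha\vee\beta$ iff $T=T_1\cup T_2$ with $T_1\models\alpha$, $T_2\models\beta$. $\mathrm{Cn}(\mathcal F)=\{V\in\mathrm{En}(\mathcal F):\mathcal F_V\text{ constant}\}$; $\mathcal F_V\sim\mathcal G_V$ iff $\mathcal F_V(\mathbf x\mathbf y)=\mathcal G_V(\mathbf x\mathbf z)$ for all $\mathbf x\in\mathrm{Ran}(PA^{\mathcal F}_V\cap PA^{\mathcal G}_V)$, $\mathbf y\in\mathrm{Ran}(PA^{\mathcal F}_V\setminus PA^{\mathcal G}_V)$, $\mathbf z\in\mathrm{Ran}(PA^{\mathcal G}_V\setminus PA^{\mathcal F}_V)$; $\mathcal F\sim\mathcal G$ iff $\mathrm{En}(\mathcal F)\setminus\mathrm{Cn}(\mathcal F)=\mathrm{En}(\mathcal G)\setminus\mathrm{Cn}(\mathcal G)$ and $\mathcal F_V\sim\mathcal G_V$ for each such $V$. Nonempty causal teams: $(T^-,\mathcal F)\approx(S^-,\mathcal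 G)$ iff $T^-=S^-$ and $\mathcal F\sim\mathcal G$. Generalized: $T^{\mathcal F}=\{(s,\mathcal G)\in T:\mathcal G\sim\mathcal F\}$; $S\approx T$ iff $(S^{\mathcal F})^-=(T^{\mathcal F})^-$ for all $\mathcal F$; $T$ uniform iff $\mathcal F\sim\mathcal G$ for all $(s,\mathcal F),(t,\mathcal G)\in T$. $S\preccurlyeq T$ iff $S\approx R$ for some causal subteam $R$ of $T$; also $\emptyset\preccurlyeq T$ for every $T$. $\Theta^{T^-}:=\bigvee_{s\in T^-}\bigwedge_{V\in\mathrm{Dom}}V=s(V)$ (equal to $\bot$ if $T^-=\emptyset$). With $\mathbf W_V$ listing $\mathrm{Dom}\setminus\{V\}$: $\Phi^{\mathcal F}:=\bigwedge_{V\in\mathrm{En}(\mathcal F)\setminus\mathrm{Cn}(\mathcal F)}\eta(V)\wedge\bigwedge_{V\notin\mathrm{En}(\mathcal F)\setminus\mathrm{Cn}(\mathcal F)}\xi(V)$, where $\eta(V)$ is the conjunction of all $(\mathbf W=\mathbf w\wedge PA^{\mathcal F}_V=\mathbf p)\;\Box\!\!\rightarrow V=\mathcal F_V(\mathbf p)$ ($\mathbf W$ listing $\mathrm{Dom}\setminus(PA^{\mathcal F}_V\cup\{V\})$, $\mathbf w\in\mathrm{Ran}(\mathbf W)$, $\mathbf p\in\mathrm{Ran}(PA^{\mathcal F}_V)$) and $\xi(V)$ is the conjunction of all $V=v\supset(\mathbf W_V=\mathbf w\;\Box\!\!\rightarrow V=v)$ ($v\in\mathrm{Ran}(V)$, $\mathbf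 w\in\mathrm{Ran}(\mathbf W_V)$). *)

(* Defs.v *)
From HB Require Import structures.
From mathcomp Require Import all_boot.
From mathcomp Require Import boolp.
Record signature := Signature {
  var : finType;
  ran : var -> finType;
  var0 : var;
  ran0 : forall X : var, ran X }.

Set Implicit Arguments. Unset Strict Implicit. Unset Printing Implicit Defensive.

Section CO.
Variable sg : signature.
Local Notation V := (var sg).
Local Notation Ran := (ran sg).

Definition assign := {dffun forall X : V, Ran X}.
(* elements of Ran(A) for a set of variables A *)
Definition passign (A : {set V}) := {dffun forall X : {X : V | X \in A}, Ran (val X)}.
Definition restrict (s : assign) (A : {set V}) : passign A :=
  @finfun _ (fun X : {X : V | X \in A} => Ran (val X)) (fun X => s (val X)).

(* systems of functions: endogenous set, parents, functions F_V : Ran(PA_V) -> Ran(V)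
   (pa and fn are irrelevant outside en) *)
Record system := System {
  en : {set V};
  pa : V -> {set V};
  fn : forall X : V, passign (pa X) -> Ran X }.

Definition edge (F : system) : rel V := fun u w => (w \in en F) && (u \in pa F w).
(* F in F_sigma : PA_V subset of Dom \ {V}, and the parent graph is acyclic *)
Definition wf (F : system) : Prop :=
  (forall X, X \in en F -> X \notin pa F X) /\
  (forall u w, edge F u w -> ~~ connect (edge F) w u).

Definition compatible (s : assign) (F : system) : Prop :=
  forall X, X \in en F -> s X = @fn F _ (restrict s (pa F X)).

(* syntax of CO[sigma]; an intervention X = x is a list of (variable, value) pairs *)
Inductive form : Type :=
| FEq (X : V) (x : Ran X)
| FNeg (a : form)
| FAnd (a b : form)
| FOr (a b : form)
| FCf (l : seq {X : V & Ran X}) (a : form).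

Definition consistent (l : seq {X : V & Ran X}) : bool :=
  all (fun p => all (fun q => (tag p == tag q) ==> (p == q)) l) l.

Definition ival (l : seq {X : V & Ran X}) (X : V) : option (Ran X) :=
  foldr (fun u acc => @untag _ Ran _ acc X (fun x => Some x) u) None l.

Definition int_sys (F : system) (l : seq {X : V & Ran X}) : system :=
  System (en F :\: [set X | isSome (ival l X)]) (@fn F).

Definition int_step (F : system) (l : seq {X : V & Ran X}) (s t : assign) : assign :=
  @finfun _ Ran (fun X => match ival l X with
                          | Some x => x
                          | None => if X \in en F then @fn F _ (restrict t (pa F X)) else s X
                          end).

(* s^F_{X=x}: the recursive definition is computed by iterating the defining
   equations #|Dom| times (this reaches the unique solution since F is acyclic). *)
Definition int_assign (s : assign) (F : system) (l : seq {X : V & Ran X}) : assign :=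
  iter #|V| (int_step F l s) s.

(* causal-team semantics |=^c ; a causal team is (T^-, F) *)
Fixpoint csat (T : {set assign}) (F : system) (a : form) {struct a} : Prop :=
  match a with
  | FEq X x => forall s, s \in T -> s X = x
  | FNeg b => forall s, s \in T -> ~ csat [set s] F b
  | FAnd b c => csat T F b /\ csat T F c
  | FOr b c => exists T1 T2 : {set assign},
      T1 :|: T2 = T /\ csat T1 F b /\ csat T2 F c
  | FCf l b => ~~ consistent l \/
      csat [set int_assign s F l | s in T] (int_sys F l) b
  end.

Definition gteam := assign * system -> Prop.

Fixpoint gsat (T : gteam) (a : form) {struct a} : Prop :=
  match a with
  | FEq X x => forall p, T p -> p.1 X = x
  | FNeg b => forall p, T p -> ~ gsat (fun q => q = p) b
  | FAnd b c => gsat T b /\ gsat T c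
  | FOr b c => exists T1 T2 : gteam,
      (forall p, T p <-> T1 p \/ T2 p) /\ gsat T1 b /\ gsat T2 c
  | FCf l b => ~~ consistent l \/
      gsat (fun p => exists s F, T (s, F) /\ p = (int_assign s F l, int_sys F l)) b
  end.

Definition is_cteam (T : {set assign}) (F : system) : Prop :=
  wf F /\ forall s, s \in T -> compatible s F.
Definition is_gteam (T : gteam) : Prop :=
  forall s F, T (s, F) -> wf F /\ compatible s F.

Definition constantb (F : system) (X : V) : bool :=
  [forall p : passign (pa F X), [forall q : passign (pa F X), @fn F _ p == @fn F _ q]].
Definition Cn (F : system) : {set V} := [set X in en F | constantb F X].
Definition NC (F : system) : {set V} := en F :\: Cn F.

Definition simfn (F G : system) (X : V) : Prop :=
  forall (p : passign (pa F X)) (q : passign (pa G X)),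
    (forall Y (h1 : Y \in pa F X) (h2 : Y \in pa G X),
        p (exist _ Y h1) = q (exist _ Y h2)) ->
    @fn F _ p = @fn G _ q.
Definition sim (F G : system) : Prop :=
  NC F = NC G /\ forall X, X \in NC F -> simfn F G X.

Definition capprox (S : {set assign}) (G : system) (T : {set assign}) (F : system) : Prop :=
  S != set0 /\ T != set0 /\ S = T /\ sim G F.
Definition cprec (S : {set assign}) (G : system) (T : {set assign}) (F : system) : Prop :=
  S = set0 \/ exists R : {set assign}, R \subset T /\ capprox S G R F.

Definition gproj (T : gteam) : {set assign} := [set s | `[< exists F, T (s, F) >]].
Definition grestr (T : gteam) (F : system) : gteam := fun p => T p /\ sim p.2 F.
Definition gapprox (S T : gteam) : Prop :=
  forall F, wf F -> gproj (grestr S F) = gproj (grestr T F).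
Definition uniform (T : gteam) : Prop :=
  forall s F t G, T (s, F) -> T (t, G) -> sim F G.
Definition gprec (S T : gteam) : Prop :=
  (forall p, ~ S p) \/ exists R : gteam, (forall p, R p -> T p) /\ gapprox S R.

Definition fbot : form := FAnd (FEq (ran0 sg (var0 sg))) (FNeg (FEq (ran0 sg (var0 sg)))).
Definition ftop : form := FNeg fbot.
Fixpoint bigor (l : seq form) : form :=
  match l with
  | [::] => fbot
  | a :: l' => match l' with [::] => a | _ => FOr a (bigor l') end
  end.
Fixpoint bigand (l : seq form) : form :=
  match l with
  | [::] => ftop
  | a :: l' => match l' with [::] => a | _ => FAnd a (bigand l') end
  end.

Definition ilist (A : {set V}) (p : passign A) : seq {X : V & Ran X} :=
  [seq Tagged Ran (p X) | X <- enum {: {X : V | X \in A}}].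

Definition Theta (T : {set assign}) : form :=
  bigor [seq bigand [seq FEq (s X) | X <- enum V] | s : assign <- enum T].

Definition eta (F : system) (X : V) : form :=
  bigand [seq FCf (ilist w ++ ilist p) (FEq (@fn F _ p))
         | w <- enum (passign (~: (pa F X :|: [set X]))),
           p <- enum (passign (pa F X))].

Definition xi (X : V) : form :=
  bigand [seq FOr (FNeg (FEq v)) (FCf (ilist w) (FEq v))
         | v <- enum (Ran X), w <- enum (passign (~: [set X]))].

Definition Phi (F : system) : form :=
  FAnd (bigand [seq eta F X | X <- enum (NC F)])
       (bigand [seq xi X | X <- enum (~: NC F)]).

End CO.

(* Main.v *)
Require Import Defs.
From HB Require Import structures.
From mathcomp Require Import all_boot.
From mathcomp Require Import boolp.
From Stdlib Require List.
Set Implicit Arguments. Unset Strict Implicit. Unset Printing Implicit Defensive.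

Lemma gsat_empty {sg : signature} (a : form sg) : forall T : gteam sg,
  (forall p, ~ T p) -> gsat T a.
Proof.
elim: a => [X x|b IH|b IHb c IHc|b IHb c IHc|l b IH] T HT /=.
- by move=> p /HT.
- by move=> p /HT.
- by split; [apply: IHb|apply: IHc].
- exists T, T; split; first by move=> p; split=> [|[]]; auto.
  by split; [apply: IHb|apply: IHc].
- right; apply: IH => p [s [G [/HT []]]].
Qed.

Definition sat1 {sg : signature} (p : assign sg * system sg) (a : form sg) :=
  gsat (fun q => q = p) a.

Lemma gsat_flat {sg : signature} (a : form sg) : forall T : gteam sg,
  gsat T a <-> forall p, T p -> sat1 p a.
Proof.
rewrite /sat1.
elim: a => [X x|b IH|b IHb c IHc|b IHb c IHc|l b IH] T /=.
- split=> H p Tp; first by move=> q ->; apply: H.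
  exact: (H p Tp p erefl).
- split=> H p Tp; first by move=> q ->; apply: H.
  exact: (H p Tp p erefl).
- split=> [[/IHb H1 /IHc H2] p Tp|H]; first by split; auto.
  by split; [apply/IHb|apply/IHc] => p /H [].
- split.
  + move=> [T1 [T2 [HT [H1 H2]]]] p /HT [T1p|T2p].
    * exists (fun q => q = p), (fun _ => False); split; first by move=> q; tauto.
      split; last by apply: gsat_empty => ? [].
      by move: H1; rewrite IHb => /(_ p T1p).
    * exists (fun _ => False), (fun q => q = p); split; first by move=> q; tauto.
      split; first by apply: gsat_empty => ? [].
      by move: H2; rewrite IHc => /(_ p T2p).
  + move=> H.
    exists (fun p => T p /\ gsat (fun q => q = p) b),
           (fun p => T p /\ gsat (fun q => q = p) c).
    split; last by rewrite IHb IHc; split=> p [].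
    move=> p; split; last by case=> -[].
    move=> Tp; have [T1 [T2 [HT [H1 H2]]]] := H p Tp.
    case: (HT p).1 => // [T1p|T2p].
    * by left; split=> //; move: H1; rewrite IHb => /(_ p T1p).
    * by right; split=> //; move: H2; rewrite IHc => /(_ p T2p).
- case: (consistent l) => /=.
  + split.
    * case=> // H p Tp; right; move: H; rewrite !IH => H q [s [G [E ->]]].
      by apply: H; exists s, G; rewrite E.
    * move=> H; right; rewrite IH => q [s [G [Tp ->]]].
      case: (H _ Tp) => // /IH; apply; by exists s, G.
  + by split=> *; [move=> *|]; left.
Qed.


Lemma sat1_eq {sg : signature} (p : assign sg * system sg) (X : var sg) (x : ran sg X) : sat1 p (FEq x) <-> p.1 X = x.
Proof. by split=> [H|H q ->//]; apply: H. Qed.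

Lemma sat1_neg {sg : signature} (p : assign sg * system sg) (b : form sg) : sat1 p (FNeg b) <-> ~ sat1 p b.
Proof. by split=> [H|H q ->//]; apply: H. Qed.

Lemma sat1_and {sg : signature} (p : assign sg * system sg) (b c : form sg) :
  sat1 p (FAnd b c) <-> sat1 p b /\ sat1 p c.
Proof. by []. Qed.

Lemma sat1_or {sg : signature} (p : assign sg * system sg) (b c : form sg) :
  sat1 p (FOr b c) <-> sat1 p b \/ sat1 p c.
Proof.
have := gsat_flat (FOr b c) (fun q => q = p).
rewrite /sat1 /= => _; split.
- move=> [T1 [T2 [HT [/gsat_flat H1 /gsat_flat H2]]]].
  by case: ((HT p).1 erefl) => [/H1|/H2]; auto.
- case=> H.
  + exists (fun q => q = p), (fun _ => False); split; first by move=> q; tauto.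
    by split; last by apply: gsat_empty => ? [].
  + exists (fun _ => False), (fun q => q = p); split; first by move=> q; tauto.
    by split; first by apply: gsat_empty => ? [].
Qed.

Lemma sat1_cf {sg : signature} (p : assign sg * system sg) l (b : form sg) :
  sat1 p (FCf l b) <-> ~~ consistent l \/ sat1 (int_assign p.1 p.2 l, int_sys p.2 l) b.
Proof.
rewrite /sat1 /=; case: (consistent l) => /=; last by split=> _; left.
split; case=> // H; right.
- move: H => /gsat_flat; apply; exists p.1, p.2; split=> //; by case: p.
- apply/gsat_flat => q [s [G [E ->]]]; by rewrite -E in H.
Qed.

Lemma sat1_fbot {sg : signature} (p : assign sg * system sg) : ~ sat1 p (fbot sg).
Proof. by rewrite /fbot sat1_and sat1_neg => -[]. Qed.

Lemma sat1_bigand {sg : signature} (p : assign sg * system sg) (l : seq (form sg)) :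
  sat1 p (bigand l) <-> forall a, List.In a l -> sat1 p a.
Proof.
elim: l => [|a l IH] /=.
- by split=> // _; rewrite /ftop sat1_neg; apply: sat1_fbot.
- case: l IH => [|a' l] IH.
  + by split=> [H a0 [<-|[]]|H]; [|apply: H; left].
  + rewrite sat1_and IH; split=> [[Ha H] a0 [<-|]|H]//; first by apply: H.
    by split=> [|a0 Ha0]; apply: H; [left|right].
Qed.

Lemma sat1_bigor {sg : signature} (p : assign sg * system sg) (l : seq (form sg)) :
  sat1 p (bigor l) <-> exists a, List.In a l /\ sat1 p a.
Proof.
elim: l => [|a l IH] /=.
- by split=> [/sat1_fbot|[? [[]]]].
- case: l IH => [|a' l] IH.
  + by split=> [H|[a0 [[<-|[]] H]]]//; exists a; auto.
  + rewrite sat1_or IH; split.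
    * by case=> [H|[a0 [H1 H2]]]; [exists a|exists a0]; auto.
    * by case=> a0 [[<-|H1] H2]; [left|right; exists a0].
Qed.

Lemma In_map {T : eqType} {U : Type} (f : T -> U) (l : seq T) y :
  List.In y [seq f x | x <- l] <-> exists2 x, x \in l & y = f x.
Proof.
elim: l => [|a l IH] /=; first by split=> // -[].
rewrite IH; split.
- case=> [<-|[x H ->]]; first by exists a; rewrite ?inE ?eqxx.
  by exists x; rewrite // inE H orbT.
- case=> x; rewrite inE => /orP[/eqP->|H] ->; first by left.
  by right; exists x.
Qed.

Lemma In_flatten {U : Type} (L : seq (seq U)) y :
  List.In y (flatten L) <-> exists l, List.In l L /\ List.In y l.
Proof.
elim: L => [|a L IH] /=; first by split=> // -[? []].
rewrite List.in_app_iff IH; split.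
- by case=> [H|[l [H1 H2]]]; [exists a|exists l]; auto.
- by case=> l [[<-|H1] H2]; [left|right; exists l].
Qed.

Lemma sat1_Theta {sg : signature} (p : assign sg * system sg) (A : {set assign sg}) :
  sat1 p (Theta A) <-> p.1 \in A.
Proof.
rewrite /Theta sat1_bigor; split.
- move=> [a [/In_map [s sA ->] /sat1_bigand H]].
  suff -> : p.1 = s by rewrite -mem_enum.
  apply/ffunP => X; apply/sat1_eq; apply: H; apply/In_map; exists X => //.
  by rewrite mem_enum.
- move=> pA; eexists; split; first by apply/In_map; exists p.1; rewrite ?mem_enum.
  apply/sat1_bigand => a /In_map [X _ ->]; exact/sat1_eq.
Qed.

Definition lst {sg : signature} (u : assign sg) (L : seq (var sg)) :
  seq {X : var sg & ran sg X} := [seq Tagged (ran sg) (u Y) | Y <- L].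

Lemma ival_lst {sg : signature} (u : assign sg) L Y :
  ival (lst u L) Y = if Y \in L then Some (u Y) else None.
Proof.
elim: L => [|Z L IH]; first by [].
rewrite -/(lst u (Z :: L)).
have -> : ival (lst u (Z :: L)) Y = @untag _ (ran sg) _ (ival (lst u L) Y) Y (fun x => Some x) (Tagged (ran sg) (u Z)) by [].
rewrite IH inE.
case: (eqVneq Y Z) => [->|ne] /=.
- by rewrite /untag; case: eqP => // e; rewrite (eq_axiomK e).
- by rewrite untag_dflt //= eq_sym.
Qed.

Lemma ival_cat {sg : signature} (l1 l2 : seq {X : var sg & ran sg X}) Y :
  ival (l1 ++ l2) Y = if ival l1 Y is Some x then Some x else ival l2 Y.
Proof.
elim: l1 => [|a l1 IH] //=; rewrite /ival /= -/(ival _ _) IH.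
by rewrite /untag; case: eqP.
Qed.

Lemma consistent_lst {sg : signature} (u : assign sg) L : consistent (lst u L).
Proof.
apply/allP => a /mapP [Y _ ->]; apply/allP => b /mapP [Z _ ->] /=.
by apply/implyP => /eqP ->.
Qed.

Lemma ilist_restrict {sg : signature} (u : assign sg) (A : {set var sg}) :
  ilist (restrict u A) = lst u [seq val Z | Z <- enum {: {X : var sg | X \in A}}].
Proof.
rewrite /ilist /lst -[RHS]map_comp; apply/eq_in_map => Z _ /=; by rewrite /restrict ffunE.
Qed.

Lemma mem_valenum {sg : signature} (A : {set var sg}) Y :
  (Y \in [seq val Z | Z <- enum {: {X : var sg | X \in A}}]) = (Y \in A).
Proof.
apply/mapP/idP => [[Z _ ->]|YA]; first exact: (valP Z).
by exists (exist _ Y YA); rewrite ?mem_enum.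
Qed.

Lemma glue {sg : signature} (A : {set var sg}) (p : passign A) (d : assign sg) :
  exists u : assign sg, restrict u A = p /\ forall Y, Y \notin A -> u Y = d Y.
Proof.
have ch : forall Y : var sg, {y : ran sg Y | (forall h : Y \in A, y = p (exist _ Y h))
                                   /\ (Y \notin A -> y = d Y)}.
  move=> Y; refine (match Y \in A as b return (Y \in A = b -> _) with
                    true => fun h => _ | false => fun h => _ end erefl).
  - exists (p (exist _ Y h)); split=> [h'|]; last by rewrite h.
    by rewrite (bool_irrelevance h h').
  - by exists (d Y); split=> // h'; rewrite h' in h.
exists (@finfun _ (ran sg) (fun Y => sval (ch Y))); split.
- apply/ffunP => -[Y h]; rewrite /restrict !ffunE /=.
  by have [H _] := svalP (ch Y); apply: H.
- by move=> Y nY; rewrite ffunE; have [_ H] := svalP (ch Y); apply: H.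
Qed.

Lemma int_assign_at {sg : signature} (G : system sg) l (s u : assign sg) X :
  (X \in en G -> X \notin pa G X) -> ival l X = None ->
  (forall Y, Y != X -> ival l Y = Some (u Y)) ->
  int_assign s G l X = if X \in en G then @fn _ G X (restrict u (pa G X)) else s X.
Proof.
move=> hpa hX hY; rewrite /int_assign.
have : 0 < #|var sg| by apply/card_gt0P; exists (var0 sg).
case E: #|var sg| => [//|n] _; rewrite iterS ffunE hX.
case XG: (X \in en G) => //.
apply: (congr1 (@fn _ G X)).
apply/ffunP => -[Y hYp].
rewrite !ffunE /=.
have YX : Y != X by apply/negP => /eqP EYX; subst Y; have := hpa XG; rewrite hYp.
case: n E => [E|n E].
- have := max_card (mem [set X; Y]); rewrite cards2 E eq_sym YX //.
- by rewrite iterS ffunE (hY Y YX).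
Qed.

Lemma restrictE {sg : signature} (u : assign sg) (A : {set var sg}) (Y : var sg) (h : Y \in A) :
  restrict u A (exist _ Y h) = u Y.
Proof. by rewrite /restrict ffunE. Qed.

Lemma restrict_eq {sg : signature} (u : assign sg) (A : {set var sg}) (p : passign A) Y (h : Y \in A) :
  restrict u A = p -> u Y = p (exist _ Y h).
Proof. by move=> <-; rewrite restrictE. Qed.

Lemma glue2 {sg : signature} (A B : {set var sg}) (w : passign A) (p : passign B)
  (d : assign sg) :
  [disjoint A & B] ->
  exists u : assign sg, [/\ restrict u A = w, restrict u B = p &
                          forall Y, Y \notin A -> Y \notin B -> u Y = d Y].
Proof.
move=> dAB; have [u1 [H1 H1']] := glue w d; have [u [H H']] := glue p u1.
exists u; split=> //; last by move=> Y nA nB; rewrite H' // H1'.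
rewrite -H1; apply/ffunP => -[Y h]; rewrite !restrictE H' //.
by rewrite (disjointFr dAB h).
Qed.

Definition ivalue {sg : signature} (G : system sg) (s : assign sg) X (u : assign sg) :=
  if X \in en G then @fn _ G X (restrict u (pa G X)) else s X.

Lemma cf_value {sg : signature} (G : system sg) (s u : assign sg) X L :
  wf G -> (forall Y, (Y \in L) = (Y != X)) ->
  int_assign s G (lst u L) X = ivalue G s X u.
Proof.
move=> [wG _] HL; apply: int_assign_at.
- exact: wG.
- by rewrite ival_lst HL eqxx.
- by move=> Y YX; rewrite ival_lst HL YX.
Qed.

Lemma NCP {sg : signature} (F : system sg) X :
  (X \in NC F) = (X \in en F) && ~~ constantb F X.
Proof. by rewrite /NC /Cn !inE; case: (X \in en F); case: (constantb F X). Qed.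

Lemma cf_restrict {sg : signature} (G : system sg) (s u : assign sg) X
  (A B : {set var sg}) (v : ran sg X) :
  wf G -> (forall Y, (Y \in A) || (Y \in B) = (Y != X)) ->
  sat1 (s, G) (FCf (ilist (restrict u A) ++ ilist (restrict u B)) (FEq v))
  <-> ivalue G s X u = v.
Proof.
move=> wG HAB; rewrite sat1_cf !ilist_restrict /lst -map_cat -/(lst u _).
rewrite consistent_lst /= sat1_eq /= cf_value //; first by split=> [[]|]; auto.
by move=> Y; rewrite mem_cat !mem_valenum HAB.
Qed.

Lemma cf_restrict1 {sg : signature} (G : system sg) (s u : assign sg) X
  (v : ran sg X) :
  wf G ->
  sat1 (s, G) (FCf (ilist (restrict u (~: [set X]))) (FEq v))
  <-> ivalue G s X u = v.
Proof.
move=> wG; rewrite sat1_cf !ilist_restrict.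
rewrite consistent_lst /= sat1_eq /= cf_value //; first by split=> [[]|]; auto.
by move=> Y; rewrite mem_valenum !inE.
Qed.

Lemma sat1_eta {sg : signature} (F G : system sg) (s : assign sg) X :
  wf F -> wf G -> X \in NC F ->
  sat1 (s, G) (Defs.eta F X) <->
  forall u, ivalue G s X u = @fn _ F X (restrict u (pa F X)).
Proof.
move=> [wF _] wG; rewrite NCP => /andP [XF _].
have nXP := wF X XF.
set W := ~: (pa F X :|: [set X]); set P := pa F X.
have HWP : forall Y, (Y \in W) || (Y \in P) = (Y != X).
  move=> Y; rewrite !inE; case: (eqVneq Y X) => [->|YX]; first by rewrite (negbTE nXP) orbT.
  by rewrite orbF; case: (Y \in P).
rewrite /Defs.eta sat1_bigand; split.
- move=> H u; apply/(cf_restrict _ _ _ wG HWP); apply: H.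
  apply/In_flatten; eexists; split; first by apply/In_map; exists (restrict u W); rewrite ?mem_enum.
  by apply/In_map; exists (restrict u P); rewrite ?mem_enum.
- move=> H a /In_flatten [l [/In_map [w _ ->] /In_map [p _ ->]]].
  have dWP : [disjoint W & P].
    by rewrite disjoint_subset; apply/subsetP => Y; rewrite !inE => /norP []...
  have [u [Hw Hp _]] := glue2 w p s dWP.
  rewrite -Hw -Hp; apply/(cf_restrict _ _ _ wG HWP); exact: H.
Qed.

Lemma sat1_xi {sg : signature} (G : system sg) (s : assign sg) X :
  wf G ->
  sat1 (s, G) (xi X) <-> forall u, ivalue G s X u = s X.
Proof.
move=> wG; rewrite /xi sat1_bigand; split.
- move=> H u.
  have : sat1 (s, G) (FOr (FNeg (FEq (s X))) (FCf (ilist (restrict u (~: [set X]))) (FEq (s X)))).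
    apply: H; apply/In_flatten; eexists; split; first by apply/In_map; exists (s X); rewrite ?mem_enum.
    by apply/In_map; exists (restrict u (~: [set X])); rewrite ?mem_enum.
  rewrite sat1_or sat1_neg sat1_eq; case=> [//|].
  by move/(cf_restrict1 _ _ _ wG).
- move=> H a /In_flatten [l [/In_map [v _ ->] /In_map [w _ ->]]].
  have [u [Hw _]] := glue w s; rewrite -Hw sat1_or sat1_neg sat1_eq /=.
  case: (eqVneq (s X) v) => [<-|ne]; last by left => E; rewrite E eqxx in ne.
  by right; apply/(cf_restrict1 _ _ _ wG).
Qed.

Lemma constP {sg : signature} (F : system sg) X :
  reflect (forall p q : passign (pa F X), @fn _ F X p = @fn _ F X q) (constantb F X).
Proof.
apply: (iffP forallP) => H p; first by move=> q; exact/eqP/(forallP (H p)).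
by apply/forallP => q; apply/eqP/H.
Qed.

Lemma Phi_sim {sg : signature} (F G : system sg) (s : assign sg) :
  wf F -> compatible s G ->
  ((forall X, X \in NC F -> forall u, ivalue G s X u = @fn _ F X (restrict u (pa F X))) /\
   (forall X, X \notin NC F -> forall u, ivalue G s X u = s X))
  <-> sim G F.
Proof.
move=> wF cG; split.
- move=> [A B].
  have sub1 : forall X, X \in NC F -> X \in NC G.
    move=> X XF; have := XF; rewrite NCP => /andP [_ /constP nc].
    rewrite NCP; apply/negPn/negP => /nandP H; apply: nc => p q.
    have [up [Hp _]] := glue p s; have [uq [Hq _]] := glue q s.
    rewrite -Hp -Hq -!(A X XF) /ivalue.
    case: H => [/negbTE -> //|/negPn /constP cst].
    by case: (X \in en G) => //; apply: cst.
  have sub2 : forall X, X \in NC G -> X \in NC F.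
    move=> X; rewrite NCP => /andP [XG /constP nc].
    apply/negPn/negP => nXF; apply: nc => p q.
    have [up [Hp _]] := glue p s; have [uq [Hq _]] := glue q s.
    have := B X nXF up; have := B X nXF uq; rewrite /ivalue XG Hp Hq => -> -> //.
  split; first by apply/setP => X; apply/idP/idP; [apply: sub2|apply: sub1].
  move=> X XG p q Hpq.
  have [u1 [Hu1 _]] := glue p s; have [u [Hu Hu']] := glue q u1.
  have Hup : restrict u (pa G X) = p.
    apply/ffunP => -[Y h]; rewrite restrictE.
    case hF: (Y \in pa F X).
    + by rewrite (restrict_eq hF Hu) Hpq.
    + by rewrite Hu' ?hF // (restrict_eq h Hu1).
  have := A X (sub2 X XG) u; rewrite /ivalue.
  have := XG; rewrite NCP => /andP [-> _].
  by rewrite Hup Hu.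
- move=> [EN S]; split.
  + move=> X XF u; have XG : X \in NC G by rewrite EN.
    have := XG; rewrite NCP /ivalue => /andP [-> _].
    apply: S => // Y h1 h2; by rewrite !restrictE.
  + move=> X nXF u; have nXG : X \notin NC G by rewrite EN.
    rewrite /ivalue; case XenG: (X \in en G) => //.
    move: nXG; rewrite NCP XenG /= => /negPn /constP cst.
    by rewrite (cG X XenG); apply: cst.
Qed.

Lemma sat1_Phi {sg : signature} (F G : system sg) (s : assign sg) :
  wf F -> wf G -> compatible s G ->
  sat1 (s, G) (Phi F) <-> sim G F.
Proof.
move=> wF wG cG; rewrite -(Phi_sim wF cG) /Phi sat1_and !sat1_bigand.
split=> -[H1 H2]; split.
- move=> X XF; apply/(sat1_eta _ wF wG XF)/H1/In_map; exists X; rewrite ?mem_enum //.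
- move=> X nXF; apply/(sat1_xi _ _ wG)/H2/In_map; exists X; rewrite ?mem_enum ?in_setC //.
- move=> a /In_map [X XF ->]; rewrite mem_enum in XF; exact/(sat1_eta _ wF wG XF)/H1.
- move=> a /In_map [X XF ->]; rewrite mem_enum in_setC in XF; exact/(sat1_xi _ _ wG)/H2.
Qed.

Lemma sat1_core {sg : signature} (F G : system sg) (s : assign sg) (A : {set assign sg}) :
  wf F -> wf G -> compatible s G ->
  sat1 (s, G) (FAnd (Theta A) (Phi F)) <-> s \in A /\ sim G F.
Proof. by move=> wF wG cG; rewrite sat1_and sat1_Theta (sat1_Phi wF wG cG). Qed.

Lemma simfn_refl {sg : signature} (F : system sg) X : simfn F F X.
Proof.
move=> p q H; congr (@fn _ F X _); apply/ffunP => -[Y h]; exact: H.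
Qed.

Lemma sim_refl {sg : signature} (F : system sg) : sim F F.
Proof. by split=> // X _; apply: simfn_refl. Qed.

Lemma sim_sym {sg : signature} (F G : system sg) : sim F G -> sim G F.
Proof.
move=> [E S]; split=> // X; rewrite -E => XF p q H; symmetry; apply: S => //.
by move=> Y h1 h2; rewrite H.
Qed.

Definition dassign {sg : signature} : assign sg := @finfun _ (ran sg) (fun Y => ran0 sg Y).

Lemma sim_trans {sg : signature} (F G H : system sg) : sim F G -> sim G H -> sim F H.
Proof.
move=> [E1 S1] [E2 S2]; split; first by rewrite E1.
move=> X XF p r Hpr.
have [u1 [Hu1 _]] := glue p dassign; have [u [Hu Hu']] := glue r u1.
have Hup : forall Y (h : Y \in pa F X), u Y = p (exist _ Y h).
  move=> Y h; case hH: (Y \in pa H X).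
  + by rewrite (restrict_eq hH Hu) Hpr.
  + by rewrite Hu' ?hH // (restrict_eq h Hu1).
have XG : X \in NC G by rewrite -E1.
transitivity (@fn _ G X (restrict u (pa G X))).
- apply: S1 => // Y h1 h2; by rewrite restrictE Hup.
- apply: S2 => // Y h1 h2; by rewrite restrictE (restrict_eq h2 Hu).
Qed.

Lemma in_gproj {sg : signature} (T : gteam sg) s : s \in gproj T <-> exists F, T (s, F).
Proof. by rewrite /gproj inE; split=> /asboolP. Qed.

Definition emb {sg : signature} (S : {set assign sg}) (G : system sg) : gteam sg :=
  fun p => p.1 \in S /\ p.2 = G.

Lemma emb1 {sg : signature} (s : assign sg) (G : system sg) :
  emb [set s] G = (fun q => q = (s, G)).
Proof.
apply: funext => -[t H]; apply: propext; rewrite /emb inE /=.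
by split=> [[/eqP -> ->]|[-> ->]].
Qed.

Lemma csat_emb {sg : signature} (a : form sg) : forall S G,
  csat S G a <-> gsat (emb S G) a.
Proof.
elim: a => [X x|b IH|b IHb c IHc|b IHb c IHc|l b IH] S G /=.
- split=> H; first by move=> p [pS _]; apply: H.
  by move=> s sS; apply: (H (s, G)).
- split=> H.
  + move=> [s G'] [/= sS ->]; rewrite -emb1 -IH; exact: H.
  + move=> s sS; rewrite IH emb1; exact: (H (s, G)).
- by rewrite IHb IHc.
- split.
  + move=> [T1 [T2 [E [H1 H2]]]]; exists (emb T1 G), (emb T2 G).
    rewrite -IHb -IHc; split=> // p; rewrite /emb -E inE.
    by split=> [[/orP [] ->]|[[-> ->]|[-> ->]]]; rewrite ?orbT; auto.
  + move=> [T1 [T2 [cov [H1 H2]]]].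
    have cov2 : forall p, T1 p \/ T2 p -> p.2 = G by move=> p /cov [].
    have E1 : T1 = emb [set s | `[< T1 (s, G) >]] G.
      apply: funext => -[s G']; apply: propext; rewrite /emb inE /=.
      split=> [h|[/asboolP h ->]] //; have E := cov2 _ (or_introl h).
      by rewrite /= in E; subst G'; split=> //; apply/asboolP.
    have E2 : T2 = emb [set s | `[< T2 (s, G) >]] G.
      apply: funext => -[s G']; apply: propext; rewrite /emb inE /=.
      split=> [h|[/asboolP h ->]] //; have E := cov2 _ (or_intror h).
      by rewrite /= in E; subst G'; split=> //; apply/asboolP.
    exists [set s | `[< T1 (s, G) >]], [set s | `[< T2 (s, G) >]].
    rewrite IHb IHc -E1 -E2; split=> //.
    apply/setP => s; rewrite !inE; have := cov (s, G); rewrite /emb /=.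
    case: (s \in S) => -[h1 h2].
    * by case: (h1 (conj erefl erefl)) => h; apply/orP; [left|right]; apply/asboolP.
    * by apply/negP => /orP [] /asboolP h; case: (h2 ltac:(tauto)).
- rewrite IH; have -> : emb [set int_assign s G l | s in S] (int_sys G l) =
    (fun p => exists s F, emb S G (s, F) /\ p = (int_assign s F l, int_sys F l)) => //.
  apply: funext => -[t H]; apply: propext; rewrite /emb /=; split.
  + by move=> [/imsetP [s sS ->] ->]; exists s, G.
  + move=> [s [F [[/= sS ->] [-> ->]]]]; split=> //; apply/imsetP; by exists s.
Qed.

Unset Implicit Arguments.

Theorem lemma4p8 (sg : signature) (F : system sg) :
  wf F ->
  (forall S T : gteam sg,
      is_gteam S -> is_gteam T -> uniform T -> T = grestr T F ->
      (gsat S (FAnd (Theta (gproj T)) (Phi F)) <-> gprec S T)) /\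
  (forall (S T : {set assign sg}) (G : system sg),
      is_cteam S G -> is_cteam T F ->
      (csat S G (FAnd (Theta T) (Phi F)) <-> cprec S G T F)).
Proof.
move=> wF; split.
- move=> S T iS iT _ hT.
  have simT : forall t H, T (t, H) -> sim H F.
    by move=> t H; rewrite {1}hT => -[].
  have -> : gsat S (FAnd (Theta (gproj T)) (Phi F)) <->
            forall s G, S (s, G) -> s \in gproj T /\ sim G F.
    rewrite gsat_flat; split=> H.
    + move=> s G SsG; have [wG cG] := iS s G SsG.
      by apply/(sat1_core _ wF wG cG)/H.
    + move=> [s G] SsG; have [wG cG] := iS s G SsG.
      by apply/(sat1_core _ wF wG cG)/H.
  split.
  + move=> H; right; exists (fun p => T p /\ p.1 \in gproj S).
    split; first by move=> p [].
    move=> F' wF'; apply/setP => s; apply/idP/idP.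
    * move=> /in_gproj [G [SsG sG]]; apply/in_gproj.
      have [/in_gproj [H' TsH] sGF] := H s G SsG.
      exists H'; split; first by split=> //; apply/in_gproj; exists G.
      apply: sim_trans (sim_trans (sim_sym sGF) sG).
      exact: simT TsH.
    * move=> /in_gproj [H' [[TsH /in_gproj [G SsG]] sH]]; apply/in_gproj.
      have [_ sGF] := H s G SsG.
      exists G; split=> //; apply: sim_trans sGF (sim_trans (sim_sym (simT _ _ TsH)) sH).
  + case=> [empty s G /empty []|[R [RT gap]] s G SsG].
    have [wG _] := iS s G SsG.
    have : s \in gproj (grestr S G) by apply/in_gproj; exists G; split=> //; apply: sim_refl.
    rewrite (gap G wG) => /in_gproj [H [RsH sHG]].
    have TsH := RT _ RsH.
    split; first by apply/in_gproj; exists H.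
    exact: sim_trans (sim_sym sHG) (simT _ _ TsH).
- move=> S T G [wG cS] _.
  rewrite csat_emb gsat_flat.
  have -> : (forall p, emb S G p -> sat1 p (FAnd (Theta T) (Phi F))) <->
            (forall s, s \in S -> s \in T /\ sim G F).
    split=> H.
    + move=> s sS; apply/(sat1_core _ wF wG (cS s sS)); apply: H; by split.
    + move=> [s G'] [/= sS ->]; by apply/(sat1_core _ wF wG (cS s sS))/H.
  split.
  + move=> H; case: (set_0Vmem S) => [->|[s sS]]; first by left.
    right; exists S; split.
    * by apply/subsetP => t /H [].
    * split; first by apply/set0Pn; exists s.
      split; first by apply/set0Pn; exists s.
      by split=> //; have [] := H s sS.
  + case=> [-> s|[R [RT [_ [_ [-> sGF]]]]] s sR]; first by rewrite inE.
    by split=> //; apply: (subsetP RT).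
Qed.
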